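(* Fix a $C^0$-concept over $\mathbb{K}$. Let $E,F\in\mathcal{M}$, $U\subseteq E$ open, $k\in\mathbb{N}_0$ and $f\colon U\to F$ of class $C^k$. Then for all $(x,h,t)\in U^{[1]}$, $$f(x+th)=\sum_{j=0}^k t^j a_j(x,h)+t^kR_{k+1}(x,h,t),$$ where $a_j\colon U\times E\to F$ is of class $C^{k-j}$ and $R_{k+1}\colon U^{[1]}\to F$ is of class $C^0$ and satisfies $R_{k+1}(x,h,0)=0$. An expansion of $f$ with these properties is unique. Moreover, $a_j(x,h)$ is homogeneous of degree $j$ in $h$, i.e. $a_j(x,sh)=s^ja_j(x,h)$ for all $s\in\mathbb{K}$.
   Context: Let $\mathbb{K}$ be a commutative ring with unit carrying a topology. A $C^0$-concept over $\mathbb{K}$ consists of: (a) a class $\mathcal{M}$ of topologized $\mathbb{K}$-modules (modules with an arbitrary topology) with $\mathbb{K}\in\mathcal{M}$; (b) for $E,F\in\mathcal{M}$ and open $U\subseteq E$, a set $C^0(U,F)$ of continuous maps $U\to F$; (c) for $E_1,E_2\in\mathcal{M}$ a topology on $E_1\times E_2$ (not necessarily the product topology) making it a member of $\mathcal{M}$; subject to: (I.1) composites of $C^0$-maps are $C^0$; identities and inclusions of open subsets are $C^0$; (I.2) $x\mapsto rx+b$ is $C^0$; (I.3) $t\mapsto tv+x$, $\mathbb{K}\to E$, is $C^0$; (I.4) $\mathbb{K}^\times$ is open and inversion is $C^0$; (I.5) being $C^0$ is local on open covers; (II.1) projections and the maps $v\mapsto(v,y)$, $w\mapsto(x,w)$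 are $C^0$; (II.2) products $f_1\times f_2$ of $C^0$-maps are $C^0$; (II.3) diagonals are $C^0$; (II.4) exchange and associativity identifications of products are $C^0$ both ways; (II.5) addition and scalar multiplication are $C^0$; (III) a $C^0$-map on an open $U\subseteq\mathbb{K}$ is determined by its restriction to $U\cap\mathbb{K}^\times$. For open $V\subseteq X$, $V^{[1]}=\{(x,v,t)\in V\times X\times\mathbb{K}:x+tv\in V\}$ (topologized as subset of the product from (c)). A $C^0$-map $g\colon V\to Y$ is $C^1$ if there is a $C^0$-map $g^{[1]}\colon V^{[1]}\to Y$ with $g(x+tv)-g(x)=t\,g^{[1]}(x,v,t)$; recursively $V^{[k+1]}=(V^{[k]})^{[1]}$, $g$ is $C^{k+1}$ if $C^k$ and $g^{[k]}$ is $C^1$, $g^{[k+1]}=(g^{[k]})^{[1]}$. *)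

(* Defs.v *)
From HB Require Import structures.
From mathcomp Require Import all_boot all_order all_algebra.
Set Implicit Arguments. Unset Strict Implicit. Unset Printing Implicit Defensive.
Import GRing.Theory.
Local Open Scope ring_scope.

(* A C^0-concept over a commutative unital ring K.
   - [Obj] indexes the class M; [car E] is the underlying K-module of E,
     [opn E] its (arbitrary) topology.
   - [C0 E F U f] : f (a total function, only its values on U matter) is in
     C^0(U,F); only meaningful for open U.
   - [KO] is K itself as a member of M (identified with K via toK/ofK); the
     topology of K is the one of [KO].
   - [prodO E1 E2] is E1 x E2 (with its chosen topology), identified with the
     product module via [pairO], [p1], [p2]. *)
Unset Implicit Arguments.
Record C0concept (K : comUnitRingType) := {
  Obj : Type;
  car : Obj -> lmodType K;
  opn : forall E, (car E -> Prop) -> Prop;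
  C0 : forall E F, (car E -> Prop) -> (car E -> car F) -> Prop;
  KO : Obj;
  toK : car KO -> K;
  ofK : K -> car KO;
  prodO : Obj -> Obj -> Obj;
  pairO : forall E1 E2, car E1 -> car E2 -> car (prodO E1 E2);
  p1 : forall E1 E2, car (prodO E1 E2) -> car E1;
  p2 : forall E1 E2, car (prodO E1 E2) -> car E2;
  opn_T : forall E, opn E (fun _ => True);
  opn_I : forall E A B, opn E A -> opn E B -> opn E (fun x => A x /\ B x);
  opn_U : forall E (I : Type) (A : I -> car E -> Prop),
      (forall i, opn E (A i)) -> opn E (fun x => exists i, A i x);
  toK_ofK : forall t, toK (ofK t) = t;
  ofK_toK : forall s, ofK (toK s) = s;
  toK_add : forall s s', toK (s + s') = toK s + toK s';
  toK_scale : forall r s, toK (r *: s) = r * toK s;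
  p1_pair : forall E1 E2 a b, p1 E1 E2 (pairO E1 E2 a b) = a;
  p2_pair : forall E1 E2 a b, p2 E1 E2 (pairO E1 E2 a b) = b;
  pair_p : forall E1 E2 z, pairO E1 E2 (p1 E1 E2 z) (p2 E1 E2 z) = z;
  pair_add : forall E1 E2 a a' b b',
      pairO E1 E2 (a + a') (b + b') = pairO E1 E2 a b + pairO E1 E2 a' b';
  pair_scale : forall E1 E2 r a b,
      pairO E1 E2 (r *: a) (r *: b) = r *: pairO E1 E2 a b;
  C0_cont : forall E F U f, opn E U -> C0 E F U f ->
      forall W, opn F W -> exists O, opn E O /\
        (forall x, U x -> (W (f x) <-> O x));
  C0_ext : forall E F U (f g : car E -> car F), opn E U ->
      (forall x, U x -> f x = g x) -> C0 E F U f -> C0 E F U g;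
  C0_comp : forall E F G U V (f : car E -> car F) (g : car F -> car G),
      opn E U -> opn F V -> (forall x, U x -> V (f x)) ->
      C0 E F U f -> C0 F G V g -> C0 E G U (fun x => g (f x));
  C0_id : forall E U, opn E U -> C0 E E U (fun x => x);
  C0_affine : forall E (r : K) (b : car E),
      C0 E E (fun _ => True) (fun x => r *: x + b);
  C0_line : forall E (v x : car E),
      C0 KO E (fun _ => True) (fun s => toK s *: v + x);
  opn_units : opn KO (fun s => toK s \is a GRing.unit);
  C0_inv : C0 KO KO (fun s => toK s \is a GRing.unit)
                    (fun s => ofK (toK s)^-1);
  C0_local : forall E F U (f : car E -> car F) (I : Type) (A : I -> car E -> Prop),
      opn E U -> (forall i, opn E (A i)) ->
      (forall x, U x <-> exists i, A i x) ->
      (forall i, C0 E F (A i) f) -> C0 E F U f;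
  C0_p1 : forall E1 E2, C0 (prodO E1 E2) E1 (fun _ => True) (p1 E1 E2);
  C0_p2 : forall E1 E2, C0 (prodO E1 E2) E2 (fun _ => True) (p2 E1 E2);
  C0_pairl : forall E1 E2 y,
      C0 E1 (prodO E1 E2) (fun _ => True) (fun v => pairO E1 E2 v y);
  C0_pairr : forall E1 E2 x,
      C0 E2 (prodO E1 E2) (fun _ => True) (fun w => pairO E1 E2 x w);
  C0_prod : forall E1 E2 F1 F2 U1 U2 (f1 : car E1 -> car F1) (f2 : car E2 -> car F2),
      opn E1 U1 -> opn E2 U2 -> C0 E1 F1 U1 f1 -> C0 E2 F2 U2 f2 ->
      C0 (prodO E1 E2) (prodO F1 F2)
         (fun z => U1 (p1 E1 E2 z) /\ U2 (p2 E1 E2 z))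
         (fun z => pairO F1 F2 (f1 (p1 E1 E2 z)) (f2 (p2 E1 E2 z)));
  C0_diag : forall E, C0 E (prodO E E) (fun _ => True) (fun x => pairO E E x x);
  C0_swap : forall E1 E2, C0 (prodO E1 E2) (prodO E2 E1) (fun _ => True)
      (fun z => pairO E2 E1 (p2 E1 E2 z) (p1 E1 E2 z));
  C0_assoc : forall E1 E2 E3,
      C0 (prodO (prodO E1 E2) E3) (prodO E1 (prodO E2 E3)) (fun _ => True)
      (fun z => pairO E1 (prodO E2 E3)
                  (p1 E1 E2 (p1 (prodO E1 E2) E3 z))
                  (pairO E2 E3 (p2 E1 E2 (p1 (prodO E1 E2) E3 z))
                               (p2 (prodO E1 E2) E3 z)));
  C0_assocV : forall E1 E2 E3,
      C0 (prodO E1 (prodO E2 E3)) (prodO (prodO E1 E2) E3) (fun _ => True)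
      (fun z => pairO (prodO E1 E2) E3
                  (pairO E1 E2 (p1 E1 (prodO E2 E3) z)
                               (p1 E2 E3 (p2 E1 (prodO E2 E3) z)))
                  (p2 E2 E3 (p2 E1 (prodO E2 E3) z)));
  C0_add : forall E, C0 (prodO E E) E (fun _ => True)
      (fun z => p1 E E z + p2 E E z);
  C0_scale : forall E, C0 (prodO KO E) E (fun _ => True)
      (fun z => toK (p1 KO E z) *: p2 KO E z);
  C0_units_dense : forall F U (f g : car KO -> car F), opn KO U ->
      C0 KO F U f -> C0 KO F U g ->
      (forall s, U s -> toK s \is a GRing.unit -> f s = g s) ->
      forall s, U s -> f s = g s
}.

Set Implicit Arguments.
Arguments Obj {K}. Arguments car {K c}. Arguments opn {K c E}.
Arguments C0 {K c E F}. Arguments KO {K c}. Arguments toK {K c}.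
Arguments ofK {K c}. Arguments prodO {K c}. Arguments pairO {K c E1 E2}.
Arguments p1 {K c E1 E2}. Arguments p2 {K c E1 E2}.

Section Ck.
Variables (K : comUnitRingType) (C : C0concept K).

Definition X1 (X : Obj C) : Obj C := prodO (prodO X X) KO.

Definition triple (X : Obj C) (x v : car X) (t : K) : car (X1 X) :=
  pairO (pairO x v) (ofK t).

(* V^{[1]} = {(x,v,t) in V x X x K : x + t v in V} *)
Definition V1 (X : Obj C) (V : car X -> Prop) : car (X1 X) -> Prop :=
  fun z => V (p1 (p1 z)) /\ V (p1 (p1 z) + toK (p2 z) *: p2 (p1 z)).

Fixpoint iterO (k : nat) (X : Obj C) : Obj C :=
  match k with 0 => X | k'.+1 => X1 (iterO k' X) end.

Fixpoint iterS (k : nat) (X : Obj C) (V : car X -> Prop)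
  : car (iterO k X) -> Prop :=
  match k return car (iterO k X) -> Prop with 0 => V | k'.+1 => V1 (@iterS k' X V) end.

Definition is_DQ (X Y : Obj C) (V : car X -> Prop) (g : car X -> car Y)
  (g1 : car (X1 X) -> car Y) : Prop :=
  C0 (V1 V) g1 /\
  forall x v t, V1 V (triple x v t) ->
    g (x + t *: v) - g x = t *: g1 (triple x v t).

Fixpoint Dk (k : nat) (X Y : Obj C) (V : car X -> Prop) (g : car X -> car Y)
  : (car (iterO k X) -> car Y) -> Prop :=
  match k return (car (iterO k X) -> car Y) -> Prop with
  | 0 => fun g0 => C0 V g /\ (forall x, V x -> g0 x = g x)
  | k'.+1 => fun gk1 => exists gk, @Dk k' X Y V g gk /\ is_DQ (@iterS k' X V) gk gk1
  end.

Definition Ck (k : nat) (X Y : Obj C) (V : car X -> Prop) (g : car X -> car Y)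
  : Prop := exists gk, @Dk k X Y V g gk.

Definition UxE (E : Obj C) (U : car E -> Prop) : car (prodO E E) -> Prop :=
  fun z => U (p1 z).

Definition is_expansion (k : nat) (E F : Obj C) (U : car E -> Prop)
  (f : car E -> car F) (a : nat -> car (prodO E E) -> car F)
  (R : car (X1 E) -> car F) : Prop :=
  (forall j, (j <= k)%N -> Ck (k - j) (UxE U) (a j)) /\
  Ck 0 (V1 U) R /\
  (forall x h, U x -> R (triple x h 0) = 0) /\
  (forall x h t, V1 U (triple x h t) ->
     f (x + t *: h) =
       \sum_(j < k.+1) t ^+ j *: a j (pairO x h) + t ^+ k *: R (triple x h t)).

End Ck.

(* Main.v *)
From Pilot Require Import Defs.
From HB Require Import structures.
From mathcomp Require Import all_boot all_order all_algebra.
From Stdlib Require Import FunctionalExtensionality PropExtensionality ClassicalEpsilon.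
Import GRing.Theory.
Local Open Scope ring_scope.
Set Implicit Arguments. Unset Strict Implicit.

Notation iS k V := (@Pilot.Defs.iterS _ _ k _ V).
Notation DK k V g G := (@Dk _ _ k _ _ V g G).

Section S.
Variables (K : comUnitRingType) (C : C0concept K).

Lemma opn_ext (X : Obj C) (A B : car X -> Prop) :
  (forall x, A x <-> B x) -> opn A -> opn B.
Proof.
move=> h; have ->: B = A; last by [].
by apply: functional_extensionality => x; apply: propositional_extensionality; split; apply h.
Qed.

Lemma C0_dext (X Y : Obj C) (A B : car X -> Prop) (f : car X -> car Y) :
  (forall x, A x <-> B x) -> C0 A f -> C0 B f.
Proof.
move=> h; have ->: B = A; last by [].
by apply: functional_extensionality => x; apply: propositional_extensionality; split; apply h.
Qed.

Lemma oT (X : Obj C) : opn (fun _ : car X => True).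
Proof. exact: opn_T. Qed.

Lemma comp (X Y Z : Obj C) (U : car X -> Prop) (V : car Y -> Prop)
  (f : car X -> car Y) (g : car Y -> car Z) :
  opn U -> opn V -> (forall x, U x -> V (f x)) -> C0 U f -> C0 V g ->
  C0 U (fun x => g (f x)).
Proof. exact: C0_comp. Qed.

Lemma ext (X Y : Obj C) (U : car X -> Prop) (f g : car X -> car Y) :
  opn U -> (forall x, U x -> f x = g x) -> C0 U f -> C0 U g.
Proof. exact: C0_ext. Qed.

Lemma restr (X Y : Obj C) (U U' : car X -> Prop) (f : car X -> car Y) :
  opn U' -> opn U -> (forall x, U' x -> U x) -> C0 U f -> C0 U' f.
Proof.
move=> h1 h2 hi hf.
exact: (comp h1 h2 hi (C0_id _ _ _ _ h1) hf).
Qed.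

Lemma restrT (X Y : Obj C) (U : car X -> Prop) (f : car X -> car Y) :
  opn U -> C0 (fun _ => True) f -> C0 U f.
Proof. move=> h; apply: restr => //; exact: oT. Qed.

Lemma compT (X Y Z : Obj C) (U : car X -> Prop)
  (f : car X -> car Y) (g : car Y -> car Z) :
  opn U -> C0 U f -> C0 (fun _ => True) g -> C0 U (fun x => g (f x)).
Proof. move=> hU hf hg; apply: (comp hU (oT _)) => //. Qed.

Lemma opn_pre (X Y : Obj C) (g : car X -> car Y) (W : car Y -> Prop) :
  C0 (fun _ => True) g -> opn W -> opn (fun x => W (g x)).
Proof.
move=> hg hW.
have [O [hO hOe]] := @C0_cont K C _ _ _ _ (oT _) hg W hW.
apply: opn_ext hO => x; split => h; apply/hOe => //.
Qed.

Lemma p1D (E1 E2 : Obj C) (a b : car (prodO E1 E2)) : p1 (a + b) = p1 a + p1 b.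
Proof. by rewrite -[a]pair_p -[b]pair_p -pair_add !p1_pair. Qed.
Lemma p2D (E1 E2 : Obj C) (a b : car (prodO E1 E2)) : p2 (a + b) = p2 a + p2 b.
Proof. by rewrite -[a]pair_p -[b]pair_p -pair_add !p2_pair. Qed.
Lemma p1Z (E1 E2 : Obj C) r (a : car (prodO E1 E2)) : p1 (r *: a) = r *: p1 a.
Proof. by rewrite -[a]pair_p -pair_scale !p1_pair. Qed.
Lemma p2Z (E1 E2 : Obj C) r (a : car (prodO E1 E2)) : p2 (r *: a) = r *: p2 a.
Proof. by rewrite -[a]pair_p -pair_scale !p2_pair. Qed.
Lemma pair0 (E1 E2 : Obj C) : pairO (0 : car E1) (0 : car E2) = 0.
Proof.
by rewrite -(scale0r (0 : car E1)) -(scale0r (0 : car E2)) pair_scale scale0r.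
Qed.
Lemma toK_inj : injective (@toK K C).
Proof. exact: (can_inj (ofK_toK K C)). Qed.
Lemma ofKD a b : ofK a + ofK b = ofK (c:=C) (a + b).
Proof. by apply: toK_inj; rewrite toK_add !toK_ofK; split. Qed.
Lemma ofKZ r a : r *: ofK a = ofK (c:=C) (r * a).
Proof. by apply: toK_inj; rewrite toK_scale !toK_ofK; split. Qed.
Lemma ofK0 : ofK (c:=C) 0 = 0.
Proof. by rewrite -(scale0r (ofK 0)) ofKZ mul0r. Qed.
Lemma toK0 : toK (c:=C) 0 = 0.
Proof. by rewrite -ofK0 toK_ofK; split. Qed.

Lemma C0_const (X Y : Obj C) (U : car X -> Prop) (b : car Y) :
  opn U -> C0 U (fun _ => b).
Proof.
move=> hU; apply: restrT => //.
have h := compT (oT _) (C0_pairl K C X Y b) (C0_p2 K C X Y).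
by apply: ext h => //; [exact: oT| move=> x _; rewrite p2_pair].
Qed.

Lemma C0_pair (X Y1 Y2 : Obj C) (U : car X -> Prop) (f : car X -> car Y1)
  (g : car X -> car Y2) :
  opn U -> C0 U f -> C0 U g -> C0 U (fun x => pairO (f x) (g x)).
Proof.
move=> hU hf hg.
have hP := C0_prod K C _ _ _ _ _ _ _ _ hU hU hf hg.
have oP : opn (fun z : car (prodO X X) => U (p1 z) /\ U (p2 z)).
  apply: opn_I; apply: opn_pre => //; [exact: C0_p1 | exact: C0_p2].
have hD : C0 U (fun x => pairO x x) by apply: restrT => //; exact: C0_diag.
have := comp hU oP _ hD hP.
move=> h; apply: ext (h _) => //.
  by move=> x _; rewrite p1_pair p2_pair.
by move=> x hx; rewrite p1_pair p2_pair.
Qed.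

Lemma C0_addf (X Y : Obj C) (U : car X -> Prop) (f g : car X -> car Y) :
  opn U -> C0 U f -> C0 U g -> C0 U (fun x => f x + g x).
Proof.
move=> hU hf hg; have h := compT hU (C0_pair hU hf hg) (C0_add K C Y).
by apply: ext h => // x _; rewrite p1_pair p2_pair.
Qed.

Lemma C0_scalef (X Y : Obj C) (U : car X -> Prop) (a : car X -> car KO)
  (g : car X -> car Y) :
  opn U -> C0 U a -> C0 U g -> C0 U (fun x => toK (a x) *: g x).
Proof.
move=> hU hf hg; have h := compT hU (C0_pair hU hf hg) (C0_scale K C Y).
by apply: ext h => // x _; rewrite p1_pair p2_pair.
Qed.

Lemma C0_post (X Y : Obj C) (U : car X -> Prop) (g : car X -> car Y) r b :
  opn U -> C0 U g -> C0 U (fun x => r *: g x + b).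
Proof. move=> hU hg; exact: (compT hU hg (C0_affine K C Y r b)). Qed.

Lemma C0_subf (X Y : Obj C) (U : car X -> Prop) (f g : car X -> car Y) :
  opn U -> C0 U f -> C0 U g -> C0 U (fun x => f x - g x).
Proof.
move=> hU hf hg; have h := C0_addf hU hf (C0_post (-1) 0 hU hg).
by apply: ext h => // x _; rewrite addr0 scaleN1r.
Qed.

Lemma C0_idT (X : Obj C) (U : car X -> Prop) : opn U -> C0 U (fun x => x).
Proof. exact: C0_id. Qed.


Lemma V1_triple (X : Obj C) (S : car X -> Prop) y v t :
  V1 S (triple y v t) <-> S y /\ S (y + t *: v).
Proof. by rewrite /V1 /triple !p1_pair !p2_pair toK_ofK. Qed.

Lemma V1_pair (X : Obj C) (S : car X -> Prop) y v s :
  V1 S (pairO (pairO y v) s) <-> S y /\ S (y + toK s *: v).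
Proof. by rewrite /V1 !p1_pair !p2_pair. Qed.

Lemma triple_eta (X : Obj C) (w : car (X1 X)) :
  triple (p1 (p1 w)) (p2 (p1 w)) (toK (p2 w)) = w.
Proof. by rewrite /triple ofK_toK !pair_p. Qed.

Lemma tripleE (X : Obj C) (y v : car X) t :
  triple y v 0 + t *: triple 0 0 1 = triple y v t.
Proof.
rewrite /triple -pair_scale -pair_scale !scaler0 ofKZ mulr1 -pair_add -pair_add.
by rewrite !addr0 ofK0 add0r.
Qed.

Lemma C0_p1p1 (X : Obj C) : C0 (fun _ => True) (fun w : car (X1 X) => p1 (p1 w)).
Proof. apply: compT; [exact: oT | exact: C0_p1 | exact: C0_p1]. Qed.
Lemma C0_p2p1 (X : Obj C) : C0 (fun _ => True) (fun w : car (X1 X) => p2 (p1 w)).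
Proof. apply: compT; [exact: oT | exact: C0_p1 | exact: C0_p2]. Qed.

Lemma opn_V1 (X : Obj C) (V : car X -> Prop) : opn V -> opn (V1 V).
Proof.
move=> hV; rewrite /V1; apply: opn_I; apply: opn_pre => //.
  exact: C0_p1p1.
apply: C0_addf; first exact: oT.
  exact: C0_p1p1.
apply: C0_scalef; [exact: oT | exact: C0_p2 | exact: C0_p2p1].
Qed.

Lemma opn_iterS (X : Obj C) (V : car X -> Prop) k : opn V -> opn (iS k V).
Proof. by move=> hV; elim: k => [|k IH] //=; apply: opn_V1. Qed.

Definition aff (X Y : Obj C) (h l : car X -> car Y) :=
  forall y v s, h (y + s *: v) = h y + s *: l v.

Definition G1 (X Y : Obj C) (h l : car X -> car Y) : car (X1 X) -> car (X1 Y) :=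
  fun w => pairO (pairO (h (p1 (p1 w))) (l (p2 (p1 w)))) (p2 w).

Lemma G1_triple (X Y : Obj C) (h l : car X -> car Y) y v t :
  G1 h l (triple y v t) = triple (h y) (l v) t.
Proof. by rewrite /G1 /triple !p1_pair !p2_pair. Qed.

Lemma G1_C0 (X Y : Obj C) (h l : car X -> car Y) :
  C0 (fun _ => True) h -> C0 (fun _ => True) l -> C0 (fun _ => True) (G1 h l).
Proof.
move=> hh hl; rewrite /G1; apply: C0_pair; first exact: oT.
  apply: C0_pair; first exact: oT.
    apply: compT hh; [exact: oT| exact: C0_p1p1].
  apply: compT hl; [exact: oT| exact: C0_p2p1].
exact: C0_p2.
Qed.

Lemma G1_aff (X Y : Obj C) (h l : car X -> car Y) :
  aff h l -> aff l l -> aff (G1 h l) (G1 l l).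
Proof.
move=> ah al y v s; rewrite /G1 !p1D !p1Z !p2D !p2Z ah al.
by rewrite -!pair_scale -!pair_add.
Qed.

Lemma G1_V1 (X Y : Obj C) (h l : car X -> car Y) (S : car X -> Prop)
  (S' : car Y -> Prop) :
  aff h l -> (forall y, S y -> S' (h y)) ->
  forall w, V1 S w -> V1 S' (G1 h l w).
Proof.
move=> ah hS w [h1 h2]; rewrite /G1 V1_pair; split; first exact: hS.
by rewrite -ah; apply: hS.
Qed.

Lemma unit_cancel (Y : Obj C) t (a b : car Y) :
  t \is a GRing.unit -> t *: a = t *: b -> a = b.
Proof.
move=> ht e; have := congr1 (fun z => t^-1 *: z) e.
by rewrite /= !scalerA mulVr // !scale1r.
Qed.

Lemma DQ_uniq (X Y : Obj C) (S : car X -> Prop) (g g' : car X -> car Y) g1 g1' :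
  opn S -> is_DQ S g g1 -> is_DQ S g' g1' -> (forall x, S x -> g x = g' x) ->
  forall w, V1 S w -> g1 w = g1' w.
Proof.
move=> hS [c1 d1] [c2 d2] he w [hy hw].
set y := p1 (p1 w) in hy hw *; set v := p2 (p1 w) in hw *.
pose O := fun s : car (@KO K C) => S (y + toK s *: v).
have oO : opn O.
  apply: opn_ext (opn_pre (C0_line K C X v y) hS) => s.
  by rewrite /O addrC.
have hin : forall s, O s -> V1 S (pairO (pairO y v) s).
  by move=> s hs; rewrite V1_pair.
have oV1 := opn_V1 hS.
have hP : C0 O (fun s => pairO (pairO y v) s).
  by apply: restrT => //; exact: C0_pairr.
have key : forall s, O s -> toK s \is a GRing.unit ->
    g1 (pairO (pairO y v) s) = g1' (pairO (pairO y v) s).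
  move=> s hs hu; apply: (unit_cancel hu).
  have ht : V1 S (triple y v (toK s)) by rewrite /triple ofK_toK; exact: hin.
  have := d1 _ _ _ ht; have := d2 _ _ _ ht.
  rewrite /triple ofK_toK => <- <-.
  by rewrite !he //; case/V1_triple: ht.
have := C0_units_dense K C Y O (fun s => g1 (pairO (pairO y v) s))
   (fun s => g1' (pairO (pairO y v) s)) oO (comp oO oV1 hin hP c1)
   (comp oO oV1 hin hP c2) key (p2 w) hw.
by rewrite /y /v !pair_p.
Qed.

Lemma Dk_C0 (X Y : Obj C) (U : car X -> Prop) (f : car X -> car Y) j G :
  opn U -> DK j U f G -> C0 (iS j U) G.
Proof.
case: j G => [|j] G hU /=.
  by case=> c e; apply: ext c => // x hx; rewrite e.
by case=> gk [_ [c _]].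
Qed.

Lemma Dk_uniq (X Y : Obj C) (U : car X -> Prop) (f : car X -> car Y) j :
  opn U -> forall g g', DK j U f g -> DK j U f g' ->
  forall w, iS j U w -> g w = g' w.
Proof.
move=> hU; elim: j => [|j IH] g g' /=.
  by move=> [_ e1] [_ e2] w hw; rewrite e1 // e2.
move=> [gk [h1 q1]] [gk' [h2 q2]].
apply: (DQ_uniq (opn_iterS _ hU) q1 q2); exact: IH h1 h2.
Qed.

Lemma Dk_extg (X Y : Obj C) (V : car X -> Prop) (g g' : car X -> car Y) m G :
  opn V -> (forall x, V x -> g x = g' x) -> DK m V g G -> DK m V g' G.
Proof.
move=> hV he; elim: m G => [|m IH] G /=.
  case=> c e; split; first by apply: ext c.
  by move=> x hx; rewrite e // he.
by case=> gk [h q]; exists gk; split => //; apply: IH.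
Qed.

Section Comp.
Variables (X Y : Obj C) (A L : car X -> car Y).
Hypotheses (aA : aff A L) (aL : aff L L)
  (cA : C0 (fun _ => True) A) (cL : C0 (fun _ => True) L).

Unset Implicit Arguments.
Fixpoint Lm (m : nat) : car (iterO m X) -> car (iterO m Y) :=
  match m return car (iterO m X) -> car (iterO m Y) with
  | 0 => L | m'.+1 => G1 (Lm m') (Lm m') end.
Fixpoint Am (m : nat) : car (iterO m X) -> car (iterO m Y) :=
  match m return car (iterO m X) -> car (iterO m Y) with
  | 0 => A | m'.+1 => G1 (Am m') (Lm m') end.
Set Implicit Arguments.

Lemma aff_Lm m : aff (Lm m) (Lm m).
Proof. by elim: m => [|m IH] //=; apply: G1_aff. Qed.
Lemma aff_Am m : aff (Am m) (Lm m).
Proof. by elim: m => [|m IH] //=; apply: G1_aff => //; apply: aff_Lm. Qed.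
Lemma C0_Lm m : C0 (fun _ => True) (Lm m).
Proof. by elim: m => [|m IH] //=; apply: G1_C0. Qed.
Lemma C0_Am m : C0 (fun _ => True) (Am m).
Proof. by elim: m => [|m IH] //=; apply: G1_C0 => //; apply: C0_Lm. Qed.

Lemma dom_Am (V : car Y -> Prop) m w :
  iS m (fun x => V (A x)) w -> iS m V (Am m w).
Proof.
elim: m w => [|m IH] w //=.
by apply: G1_V1 => //; apply: aff_Am.
Qed.

Lemma comp_Dk (Z : Obj C) m (V : car Y -> Prop) (g : car Y -> car Z) G :
  opn V -> DK m V g G ->
  DK m (fun x => V (A x)) (fun x => g (A x)) (fun w => G (Am m w)).
Proof.
move=> hV; have oV' := opn_pre cA hV.
elim: m G => [|m IH] G /=.
  case=> c e; split; last by move=> x hx; rewrite e.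
  exact: (comp oV' hV (fun x h => h) (restrT oV' cA) c).
case=> Gk [h [q d]]; exists (fun w => Gk (Am m w)); split; first exact: IH.
split.
  have oA := opn_V1 (opn_iterS m oV'); have oB := opn_V1 (opn_iterS m hV).
  apply: (comp oA oB _ (restrT oA (C0_Am m.+1)) q).
  by apply: G1_V1; [apply: aff_Am | apply: dom_Am].
move=> y v t /V1_triple [h1 h2].
rewrite aff_Am G1_triple; apply: d; apply/V1_triple; split.
  exact: dom_Am.
by rewrite -aff_Am; apply: dom_Am.
Qed.
End Comp.

Unset Implicit Arguments.
Fixpoint phi (X : Obj C) (m : nat) : car (iterO m.+1 X) -> car (iterO m (X1 X)) :=
  match m return car (iterO m.+1 X) -> car (iterO m (X1 X)) with
  | 0 => fun w => w | m'.+1 => G1 (phi X m') (phi X m') end.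
Set Implicit Arguments.

Lemma aff_phi X m : aff (phi X m) (phi X m).
Proof.
elim: m => [|m IH] /=; last exact: G1_aff.
by move=> y v s.
Qed.
Lemma C0_phi X m : C0 (fun _ => True) (phi X m).
Proof. elim: m => [|m IH] /=; [exact: C0_idT (oT _) | exact: G1_C0]. Qed.
Lemma dom_phi X (V : car X -> Prop) m w :
  iS m.+1 V w -> iS m (V1 V) (phi X m w).
Proof.
elim: m w => [|m IH] w //=.
by apply: G1_V1 => //; apply: aff_phi.
Qed.

Lemma shift (X Y : Obj C) m : forall (V : car X -> Prop) (g : car X -> car Y) g1 G',
  opn V -> C0 V g -> is_DQ V g g1 -> DK m (V1 V) g1 G' ->
  DK m.+1 V g (fun w => G' (phi X m w)).
Proof.
elim: m => [|m IH] V g g1 G' hV cg [c d] /=.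
  case=> c1 e; exists g; split; first by split.
  split; first by apply: ext c; [exact: opn_V1 | move=> x hx; rewrite e].
  by move=> y v t ht; rewrite e //; apply: d.
case=> G'' [h [q dq]].
exists (fun w => G'' (phi X m w)); split; first exact: (IH V g g1).
have oA := opn_V1 (opn_iterS m.+1 hV).
have oB := opn_V1 (opn_iterS m (opn_V1 hV)).
split.
  apply: (comp oA oB _ (restrT oA (C0_phi X m.+1)) q).
  by apply: G1_V1; [apply: aff_phi | apply: dom_phi].
move=> y v t /V1_triple [h1 h2].
rewrite aff_phi G1_triple; apply: dq; apply/V1_triple; split.
  exact: dom_phi.
by rewrite -aff_phi; apply: dom_phi.
Qed.

Lemma shift2 (E F : Obj C) (U : car E -> Prop) (f : car E -> car F) :
  opn U -> forall m j (G : car (iterO (m + j) E) -> car F),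
  DK (m + j) U f G -> exists g, DK j U f g /\ Ck m (iS j U) g.
Proof.
move=> hU; elim=> [|m IH] j.
  move=> G h; exists G; split => //; exists G; split => //.
  exact: Dk_C0 h.
rewrite (addSnnS m j) => G h.
have [g' [[g [hg hq]] [G' hG']]] := IH j.+1 G h.
exists g; split => //; exists (fun w => G' (phi (iterO j E) m w)).
apply: (shift (opn_iterS j hU) _ hq hG'); exact: Dk_C0 hg.
Qed.


Section Poly.
Variables (F : Obj C) (rho : car (@KO K C) -> car F).

Fixpoint J (n : nat) (D : nat -> car F) (t : car (@KO K C)) : car F :=
  match n with
  | 0 => D 0%N + rho t
  | n'.+1 => D 0%N + toK t *: J n' (fun i => D i.+1) t end.

Lemma J_sum n D t :
  J n D t = \sum_(i < n.+1) toK t ^+ i *: D i + toK t ^+ n *: rho t.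
Proof.
elim: n D => [|n IH] D /=.
  by rewrite big_ord1 !expr0 !scale1r.
rewrite IH [in RHS]big_ord_recl expr0 scale1r scalerDr scaler_sumr -!addrA.
congr (_ + _); rewrite scalerA -exprS; congr (_ + _); apply: eq_bigr => i _.
by rewrite scalerA -exprS.
Qed.

Lemma J_C0 (O : car (@KO K C) -> Prop) n D :
  opn O -> C0 O rho -> C0 O (J n D).
Proof.
move=> hO hr; elim: n D => [|n IH] D /=.
  by apply: C0_addf => //; apply: C0_const.
apply: C0_addf => //; first exact: C0_const.
apply: C0_scalef => //; try exact: C0_idT; try exact: IH.
Qed.

Lemma J_zero (O : car (@KO K C) -> Prop) n D :
  opn O -> O (ofK 0) -> C0 O rho -> rho (ofK 0) = 0 ->
  (forall t, O t -> J n D t = 0) ->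
  (forall i, (i <= n)%N -> D i = 0) /\ (forall t, O t -> rho t = 0).
Proof.
move=> hO h0 hr r0; elim: n D => [|n IH] D /= H.
  have D0 : D 0%N = 0 by have := H _ h0; rewrite r0 addr0.
  split; first by case.
  by move=> t ht; have := H _ ht; rewrite D0 add0r.
have D0 : D 0%N = 0 by have := H _ h0; rewrite toK_ofK scale0r addr0.
have H' : forall t, O t -> J n (fun i => D i.+1) t = 0.
  apply: (C0_units_dense K C F O _ (fun _ => 0) hO (J_C0 _ _ hO hr)
     (C0_const _ hO)) => t ht hu.
  apply: (unit_cancel hu); rewrite scaler0.
  by have := H _ ht; rewrite D0 add0r.
have [IH1 IH2] := IH _ H'; split => // -[|i] hi //; exact: IH1.
Qed.
End Poly.

Lemma PU (F : Obj C) (O : car (@KO K C) -> Prop) k (c d : nat -> car F)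
  (r1 r2 : car (@KO K C) -> car F) :
  opn O -> O (ofK 0) -> C0 O r1 -> C0 O r2 -> r1 (ofK 0) = 0 -> r2 (ofK 0) = 0 ->
  (forall t, O t -> \sum_(j < k.+1) toK t ^+ j *: c j + toK t ^+ k *: r1 t =
                    \sum_(j < k.+1) toK t ^+ j *: d j + toK t ^+ k *: r2 t) ->
  (forall j, (j <= k)%N -> c j = d j) /\ (forall t, O t -> r1 t = r2 t).
Proof.
move=> hO h0 c1 c2 z1 z2 H.
have := @J_zero F (fun t => r1 t - r2 t) O k (fun j => c j - d j) hO h0
  (C0_subf hO c1 c2) _ _.
case.
- by rewrite z1 z2 subrr.
- move=> t ht; rewrite J_sum.
  have -> : \sum_(i < k.+1) toK t ^+ i *: (c i - d i) =
      \sum_(i < k.+1) toK t ^+ i *: c i - \sum_(i < k.+1) toK t ^+ i *: d i.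
    by rewrite -sumrB; apply: eq_bigr => i _; rewrite scalerBr.
  by rewrite scalerBr addrACA -opprD H // subrr.
move=> A B; split.
  by move=> j hj; apply/eqP; rewrite -subr_eq0; apply/eqP; apply: A.
by move=> t ht; apply/eqP; rewrite -subr_eq0; apply/eqP; apply: B.
Qed.


Lemma Dk_dext (X Y : Obj C) (V V' : car X -> Prop) (g : car X -> car Y) m G :
  (forall x, V x <-> V' x) -> DK m V g G -> DK m V' g G.
Proof.
move=> h; have ->: V' = V; last by [].
by apply: functional_extensionality => x; apply: propositional_extensionality; split; apply h.
Qed.

Lemma aff_triple0 (X Y : Obj C) (h h' l l' : car X -> car Y) :
  aff h l -> aff h' l' ->
  aff (fun z => triple (h z) (h' z) 0) (fun z => triple (l z) (l' z) 0).
Proof.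
move=> a1 a2 y v s; rewrite /triple a1 a2.
by rewrite -!pair_scale -!pair_add ofK0 scaler0 addr0.
Qed.

Lemma aff_const (X Y : Obj C) (c : car Y) : aff (fun _ : car X => c) (fun _ => 0).
Proof. by move=> y v s; rewrite scaler0 addr0. Qed.

Lemma C0_triple0 (X Y : Obj C) (h h' : car X -> car Y) :
  C0 (fun _ => True) h -> C0 (fun _ => True) h' ->
  C0 (fun _ => True) (fun z => triple (h z) (h' z) 0).
Proof.
move=> c1 c2; rewrite /triple; apply: C0_pair; first exact: oT.
  by apply: C0_pair => //; exact: oT.
by apply: C0_const; exact: oT.
Qed.

Unset Implicit Arguments.
Fixpoint be (E : Obj C) (n : nat) :
  (car (prodO E E) -> car (iterO n E)) * (car (prodO E E) -> car (iterO n E)) :=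
  match n return
    (car (prodO E E) -> car (iterO n E)) * (car (prodO E E) -> car (iterO n E)) with
  | 0 => (fun z => p1 z, fun z => p2 z)
  | n'.+1 => (fun z => triple ((be E n').1 z) ((be E n').2 z) 0, fun _ => triple 0 0 1)
  end.
Fixpoint BE (E : Obj C) (n : nat) :
  (car (prodO E E) -> car (iterO n E)) * (car (prodO E E) -> car (iterO n E)) :=
  match n return
    (car (prodO E E) -> car (iterO n E)) * (car (prodO E E) -> car (iterO n E)) with
  | 0 => (fun z => p1 z, fun z => p2 z)
  | n'.+1 => (fun z => triple ((BE E n').1 z) ((BE E n').2 z) 0, fun _ => 0)
  end.
Set Implicit Arguments.

Lemma aff_be (E : Obj C) n :
  [/\ aff (be E n).1 (BE E n).1, aff (be E n).2 (BE E n).2,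
      aff (BE E n).1 (BE E n).1 & aff (BE E n).2 (BE E n).2].
Proof.
elim: n => [|n [a1 a2 a3 a4]] /=.
  have h1 : aff (fun z : car (prodO E E) => p1 z) (fun z => p1 z).
    by move=> y v s; rewrite p1D p1Z.
  have h2 : aff (fun z : car (prodO E E) => p2 z) (fun z => p2 z).
    by move=> y v s; rewrite p2D p2Z.
  by split.
split; try apply: aff_triple0 => //; exact: aff_const.
Qed.

Lemma C0_be (E : Obj C) n :
  [/\ C0 (fun _ => True) (be E n).1, C0 (fun _ => True) (be E n).2,
      C0 (fun _ => True) (BE E n).1 & C0 (fun _ => True) (BE E n).2].
Proof.
elim: n => [|n [a1 a2 a3 a4]] /=.
  by split; [exact: C0_p1 | exact: C0_p2 | exact: C0_p1 | exact: C0_p2].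
split; try apply: C0_triple0 => //; apply: C0_const; exact: oT.
Qed.

Lemma dom_b (E : Obj C) (U : car E -> Prop) n z :
  iS n U ((be E n).1 z) <-> U (p1 z).
Proof.
elim: n => [|n IH] //=.
rewrite V1_triple scale0r addr0; split; first by case=> /IH.
by move/IH.
Qed.

Lemma dom_P (E : Obj C) (U : car E -> Prop) n z t :
  U (p1 z) -> U (p1 z + t *: p2 z) ->
  iS n U ((be E n).1 z) /\ iS n U ((be E n).1 z + t *: (be E n).2 z).
Proof.
move=> h1 h2; elim: n => [|n [IH1 IH2]] //=.
split; first by apply/(V1_triple (iS n U)); rewrite scale0r addr0.
by rewrite tripleE; apply/(V1_triple (iS n U)).
Qed.

Lemma existence (E F : Obj C) (U : car E -> Prop) (f : car E -> car F) k :
  opn U -> Ck k U f -> exists a R, is_expansion k U f a R.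
Proof.
move=> hU [G hG].
have hj : forall j, (j <= k)%N ->
    exists g, DK j U f g /\ Ck (k - j) (iS j U) g.
  move=> j hjk.
  have gen : forall n (G' : car (iterO n E) -> car F), DK n U f G' ->
      n = (k - j + j)%N -> exists g, DK j U f g /\ Ck (k - j) (iS j U) g.
    by move=> n G' h e; subst n; apply: (shift2 hU h).
  by apply: (gen k G hG); rewrite subnK.
pose gj j := epsilon (inhabits (fun _ : car (iterO j E) => (0 : car F)))
  (fun g => DK j U f g /\ Ck (k - j) (iS j U) g).
have gjP : forall j, (j <= k)%N -> DK j U f (gj j) /\ Ck (k - j) (iS j U) (gj j).
  by move=> j hjk; rewrite /gj; apply: (epsilon_spec _ _ (hj j hjk)).
have tay : forall x h t, V1 U (triple x h t) -> forall n, (n <= k)%N ->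
  f (x + t *: h) = \sum_(j < n) t ^+ j *: gj j ((be E j).1 (pairO x h)) +
     t ^+ n *: gj n ((be E n).1 (pairO x h) + t *: (be E n).2 (pairO x h)).
  move=> x h t /V1_triple [hx hxt].
  have hz1 : U (p1 (pairO x h)) by rewrite p1_pair.
  have hz2 : U (p1 (pairO x h) + t *: p2 (pairO x h)) by rewrite p1_pair p2_pair.
  elim=> [|n IH] hn.
    rewrite big_ord0 add0r expr0 scale1r /= p1_pair p2_pair.
    by have [[_ e0] _] := gjP 0%N (leq0n k); rewrite e0.
  have hn' : (n <= k)%N := ltnW hn.
  rewrite IH // big_ord_recr /= -addrA; congr (_ + _).
  have [[g' [hg' [_ dq]]] _] := gjP n.+1 hn.
  have [d1 d2] := dom_P n hz1 hz2.
  have eq' := Dk_uniq hU (gjP n hn').1 hg'.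
  rewrite (eq' _ d1) (eq' _ d2).
  have hT : V1 (iS n U) (triple ((be E n).1 (pairO x h)) ((be E n).2 (pairO x h)) t).
    by apply/V1_triple.
  have := dq _ _ _ hT; move/eqP; rewrite subr_eq => /eqP ->.
  by rewrite tripleE scalerDr scalerA -exprSr addrC.
exists (fun j z => gj j ((be E j).1 z)).
exists (fun w => gj k ((be E k).1 (p1 w) + toK (p2 w) *: (be E k).2 (p1 w)) -
                 gj k ((be E k).1 (p1 w))).
split; [|split; [|split]].
- move=> j hjk; have [_ [G' hG']] := gjP j hjk.
  have [a1 _ a3 _] := aff_be E j; have [c1 _ c3 _] := C0_be E j.
  have H := comp_Dk a1 a3 c1 c3 (opn_iterS j hU) hG'.
  eexists; apply: Dk_dext H => z; exact: dom_b.
- eexists; split; last by [].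
  have [hD _] := gjP k (leqnn k).
  have cg := Dk_C0 hU hD.
  have [c1 c2 _ _] := C0_be E k.
  have oV := opn_V1 hU; have oS := opn_iterS k hU.
  have cb : C0 (V1 U) (fun w : car (X1 E) => (be E k).1 (p1 w)).
    by apply: restrT oV _; apply: compT c1; [exact: oT | exact: C0_p1].
  have ce : C0 (V1 U) (fun w : car (X1 E) => (be E k).2 (p1 w)).
    by apply: restrT oV _; apply: compT c2; [exact: oT | exact: C0_p1].
  apply: C0_subf => //.
    apply: (comp oV oS _ _ cg).
      by move=> w [h1 h2]; exact: (dom_P k h1 h2).2.
    apply: C0_addf => //; apply: C0_scalef => //.
    by apply: restrT oV _; exact: C0_p2.
  apply: (comp oV oS _ cb cg).
  by move=> w [h1 h2]; exact: (dom_P k h1 h2).1.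
- move=> x h hx /=.
  by rewrite /triple !p1_pair !p2_pair toK_ofK scale0r addr0 subrr.
- move=> x h t hV; rewrite (tay x h t hV k (leqnn k)) big_ord_recr /=.
  rewrite /triple !p1_pair !p2_pair toK_ofK.
  by rewrite scalerBr addrA addrAC addrK.
Qed.


Unset Implicit Arguments.
Lemma exp_line (E F : Obj C) (U : car E -> Prop) (f : car E -> car F) k a R
  (hU : opn U) (he : is_expansion k U f a R) (x h : car E) (hx : U x) :
  [/\ opn (fun t : car (@KO K C) => U (x + toK t *: h)),
      U (x + toK (ofK (c:=C) 0) *: h),
      C0 (fun t : car (@KO K C) => U (x + toK t *: h)) (fun t => R (pairO (pairO x h) t)),
      R (pairO (pairO x h) (ofK 0)) = 0 &
      forall t : car (@KO K C), U (x + toK t *: h) ->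
        f (x + toK t *: h) = \sum_(j < k.+1) toK t ^+ j *: a j (pairO x h)
                             + toK t ^+ k *: R (pairO (pairO x h) t)].
Proof.
case: he => [_ [[G [cR _]] [R0 Tay]]].
have oO : opn (fun t : car (@KO K C) => U (x + toK t *: h)).
  by apply: opn_ext (opn_pre (C0_line K C E h x) hU) => s; rewrite addrC.
split => //.
- by rewrite toK_ofK scale0r addr0.
- apply: (comp oO (opn_V1 hU) _ (restrT oO (C0_pairr K C _ _ (pairO x h))) cR).
  by move=> t ht; apply/V1_pair; split.
- exact: R0 x h hx.
- move=> t ht; have := Tay x h (toK t); rewrite /triple ofK_toK; apply.
  by apply/V1_pair; split.
Qed.
Set Implicit Arguments.

Lemma uniq_exp (E F : Obj C) (U : car E -> Prop) (f : car E -> car F) k a R a' R' :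
  opn U -> is_expansion k U f a R -> is_expansion k U f a' R' ->
  (forall j, (j <= k)%N -> forall z, UxE U z -> a j z = a' j z) /\
  (forall z, V1 U z -> R z = R' z).
Proof.
move=> hU e1 e2; split.
  move=> j hj z hz.
  have [o1 o0 c1 z1 t1] := exp_line E F U f k a R hU e1 (p1 z) (p2 z) hz.
  have [_ _ c2 z2 t2] := exp_line E F U f k a' R' hU e2 (p1 z) (p2 z) hz.
  have [A _] := PU (c := fun j => a j (pairO (p1 z) (p2 z)))
    (d := fun j => a' j (pairO (p1 z) (p2 z)))
    o1 o0 c1 c2 z1 z2 (fun t ht => etrans (esym (t1 t ht)) (t2 t ht)).
  by have := A j hj; rewrite pair_p.
move=> z [hx hz].
have [o1 o0 c1 z1 t1] := exp_line E F U f k a R hU e1 (p1 (p1 z)) (p2 (p1 z)) hx.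
have [_ _ c2 z2 t2] := exp_line E F U f k a' R' hU e2 (p1 (p1 z)) (p2 (p1 z)) hx.
have [_ B] := PU (c := fun j => a j (pairO (p1 (p1 z)) (p2 (p1 z))))
    (d := fun j => a' j (pairO (p1 (p1 z)) (p2 (p1 z))))
    o1 o0 c1 c2 z1 z2 (fun t ht => etrans (esym (t1 t ht)) (t2 t ht)).
by have := B (p2 z) hz; rewrite !pair_p.
Qed.

Lemma homog (E F : Obj C) (U : car E -> Prop) (f : car E -> car F) k a R :
  opn U -> is_expansion k U f a R ->
  forall j, (j <= k)%N -> forall x h (s : K), U x ->
    a j (pairO x (s *: h)) = s ^+ j *: a j (pairO x h).
Proof.
move=> hU e j hj x h s hx.
have [o1 o0 c1 z1 t1] := exp_line E F U f k a R hU e x (s *: h) hx.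
have [o2 _ c2 z2 t2] := exp_line E F U f k a R hU e x h hx.
have hsc : forall t : car (@KO K C), toK (s *: t) *: h = toK t *: (s *: h).
  by move=> t; rewrite toK_scale scalerA mulrC.
have cm : C0 (fun t : car (@KO K C) => U (x + toK t *: (s *: h))) (fun t => s *: t).
  apply: restrT o1 _.
  apply: ext (C0_affine K C _ s 0); [exact: oT | by move=> t _; rewrite addr0].
have c3 := comp o1 o2 (fun t ht => eq_ind _ (fun q => U (x + q)) ht _ (esym (hsc t)))
  cm c2.
have c4 := C0_post (s ^+ k) 0 o1 c3.
have c5 : C0 (fun t : car (@KO K C) => U (x + toK t *: (s *: h)))
   (fun t => s ^+ k *: R (pairO (pairO x h) (s *: t))).
  by apply: ext c4 => // t _; rewrite addr0.
have Z2 : s ^+ k *: R (pairO (pairO x h) (s *: ofK 0)) = 0.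
  by rewrite ofKZ mulr0 z2 scaler0.
have H : forall t : car (@KO K C), U (x + toK t *: (s *: h)) ->
    \sum_(j < k.+1) toK t ^+ j *: a j (pairO x (s *: h)) +
       toK t ^+ k *: R (pairO (pairO x (s *: h)) t) =
    \sum_(j < k.+1) toK t ^+ j *: (s ^+ j *: a j (pairO x h)) +
       toK t ^+ k *: (s ^+ k *: R (pairO (pairO x h) (s *: t))).
  move=> t ht; rewrite -t1 // -hsc t2 ?hsc // toK_scale.
  congr (_ + _); last by rewrite scalerA exprMn mulrC.
  by apply: eq_bigr => i _; rewrite scalerA exprMn mulrC.
have [A _] := PU (c := fun j => a j (pairO x (s *: h)))
  (d := fun j => s ^+ j *: a j (pairO x h))
  (r2 := fun t => s ^+ k *: R (pairO (pairO x h) (s *: t))) o1 o0 c1 c5 z1 Z2 H.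
exact: A.
Qed.

End S.

Theorem theorem5p1 (K : comUnitRingType) (C : C0concept K) (E F : Obj C)
  (U : car E -> Prop) (k : nat) (f : car E -> car F) :
  opn U -> Ck k U f ->
  (exists (a : nat -> car (prodO E E) -> car F) (R : car (X1 E) -> car F),
      is_expansion k U f a R) /\
  (forall a R a' R', is_expansion k U f a R -> is_expansion k U f a' R' ->
     (forall j, (j <= k)%N -> forall z, UxE U z -> a j z = a' j z) /\
     (forall z, V1 U z -> R z = R' z)) /\
  (forall a R, is_expansion k U f a R ->
     forall j, (j <= k)%N -> forall x h (s : K), U x ->
       a j (pairO x (s *: h)) = s ^+ j *: a j (pairO x h)).
Proof.
move=> hU hf; split; first exact: existence.
split.
  by move=> a R a' R' e1 e2; exact: (uniq_exp hU e1 e2).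
by move=> a R e; exact: (homog hU e).
Qed.
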